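(* Let $S\subseteq\mathbb{R}^n$ be a closed set, $H$ an affine hyperplane, and $C\subseteq\mathbb{R}^n$ a convex $S$-free set. Assume $C=\{x\in\mathbb{R}^n : \alpha^\mathsf{T} x\le\beta\ \forall(\alpha,\beta)\in\Gamma\}$ for some family $\Gamma$ of inequalities, and that for every $(\alpha,\beta)\in\Gamma$ either there is a point $x\in S\cap C\cap H$ that exposes $(\alpha,\beta)$ with respect to $C$, or there is a sequence $(x_k)_k\subseteq S\cap H$ that exposes $(\alpha,\beta)$ at infinity with respect to $C$. Then $C$ is maximal $S$-free with respect to $H$.
   Context: A convex set $C$ is $S$-free if $\operatorname{int}(C)\cap S=\emptyset$. Given an affine hyperplane $H$, a closed convex $C$ is $S$-free with respect to $H$ if the interior of $C\cap H$ relative to $H$ does not meet $S\cap H$; it is maximal $S$-free with respect to $H$ if for every closed convex $C'\supseteq C$ that is $S$-free with respect to $H$, $C'\cap H\subseteq C\cap H$. An inequality $\alpha^\mathsf{T} x\le\beta$ (written $(\alpha,\beta)$) is valid for $C$ if it holds on $C$; it is non-trivial if $\alpha\neq0$. A point $x_0$ exposes a valid inequality $(\alpha,\beta)$ with respect to convex $C$ if $\alpha^\mathsf{T} x_0=\beta$ and for every non-trivial valid inequality $\gamma^\mathsf{T} x\le\delta$ for $C$ with $\gamma^\mathsf{T} x_0=\delta$ there is $\mu>0$ with $\gamma=\mu\alpha$ and $\delta=\mu\beta$. A sequence $(x_k)_k$ exposes a valid inequality $(\alpha,\beta)$ at infinity with respect to $C$ if: $\|x_k\|\to\infty$; $x_k/\|x_k\|\to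 d\in\operatorname{rec}(C)$ (the recession cone); $d$ exposes $\alpha^\mathsf{T} x\le0$ with respect to $\operatorname{rec}(C)$; and there exists $y$ with $\alpha^\mathsf{T} y=\beta$ such that $\operatorname{dist}(x_k,y+\langle d\rangle)\to0$, where $\langle d\rangle$ is the line spanned by $d$. *)

(* Defs.v *)
From HB Require Import structures.
From mathcomp Require Import all_boot all_order all_algebra.
From mathcomp Require Import all_classical all_reals all_analysis.
Set Implicit Arguments. Unset Strict Implicit. Unset Printing Implicit Defensive.
Import Order.TTheory GRing.Theory Num.Theory.
Import numFieldNormedType.Exports.
Local Open Scope classical_set_scope.
Local Open Scope ring_scope.

Section Defs.
Variables (R : realType) (n : nat).
Notation V := 'rV[R]_n.

Definition dot (u v : V) : R := \sum_(i < n) u ord0 i * v ord0 i.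
Definition enorm (u : V) : R := Num.sqrt (dot u u).

Definition edist (x : V) (A : set V) : R := inf [set enorm (x - z) | z in A].

Definition einterior (A : set V) : set V :=
  [set x | exists2 e : R, 0 < e & forall y, enorm (y - x) < e -> A y].
Definition eclosed (A : set V) : Prop :=
  forall x, ~ A x -> exists2 e : R, 0 < e & forall y, enorm (y - x) < e -> ~ A y.

Definition hyperplane (a : V) (b : R) : set V := [set x | dot a x = b].

Definition relinterior (H A : set V) : set V :=
  [set x | H x /\ A x /\ exists2 e : R, 0 < e &
             forall y, H y -> enorm (y - x) < e -> A y].

Definition is_convex (C : set V) : Prop :=
  forall x y (t : R), C x -> C y -> 0 <= t -> t <= 1 -> C (t *: x + (1 - t) *: y).

Definition S_free (S C : set V) : Prop := einterior C `&` S = set0.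

Definition S_free_wrt (S H C : set V) : Prop :=
  relinterior H (C `&` H) `&` (S `&` H) = set0.

Definition maximal_S_free_wrt (S H C : set V) : Prop :=
  forall C' : set V, eclosed C' -> is_convex C' -> C `<=` C' ->
    S_free_wrt S H C' -> C' `&` H `<=` C `&` H.

Definition valid (C : set V) (a : V) (b : R) : Prop := forall x, C x -> dot a x <= b.

Definition rec_cone (C : set V) : set V :=
  [set d | forall x, C x -> forall t : R, 0 <= t -> C (x + t *: d)].

Definition exposes (C : set V) (x0 : V) (a : V) (b : R) : Prop :=
  valid C a b /\ dot a x0 = b /\
  forall (g : V) (dl : R), g != 0 -> valid C g dl -> dot g x0 = dl ->
    exists2 mu : R, 0 < mu & g = mu *: a /\ dl = mu * b.

Definition aff_line (y d : V) : set V := [set y + t *: d | t in [set: R]].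

Definition exposes_at_infinity (C : set V) (xs : nat -> V) (a : V) (b : R) : Prop :=
  (fun k => enorm (xs k)) @ \oo --> +oo /\
  exists d : V,
    (fun k => enorm ((enorm (xs k))^-1 *: xs k - d)) @ \oo --> (0 : R) /\
    rec_cone C d /\
    exposes (rec_cone C) d a 0 /\
    exists y : V, dot a y = b /\
      (fun k => edist (xs k) (aff_line y d)) @ \oo --> (0 : R).

End Defs.

(* Main.v *)
Require Import Defs.
From HB Require Import structures.
From mathcomp Require Import all_boot all_order all_algebra.
From mathcomp Require Import all_classical all_reals all_analysis.
From mathcomp Require Import ring lra.
Import Order.TTheory GRing.Theory Num.Theory.
Import numFieldNormedType.Exports.
Local Open Scope classical_set_scope.
Local Open Scope ring_scope.

Section Aux.
Variables (R : realType) (n : nat).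
Implicit Types (u v w : 'rV[R]_n).

Lemma dotC u v : dot u v = dot v u.
Proof. by apply: eq_bigr => i _; rewrite mulrC. Qed.

Lemma dotDl u v w : dot (u + v) w = dot u w + dot v w.
Proof. by rewrite /dot -big_split; apply: eq_bigr => i _; rewrite mxE mulrDl. Qed.

Lemma dotZl k u v : dot (k *: u) v = k * dot u v.
Proof. by rewrite /dot mulr_sumr; apply: eq_bigr => i _; rewrite mxE mulrA. Qed.

Lemma dotNl u v : dot (- u) v = - dot u v.
Proof. by rewrite -scaleN1r dotZl mulN1r. Qed.

Lemma dotBl u v w : dot (u - v) w = dot u w - dot v w.
Proof. by rewrite dotDl dotNl. Qed.

Lemma dotDr u v w : dot w (u + v) = dot w u + dot w v.
Proof. by rewrite dotC dotDl !(dotC w). Qed.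

Lemma dotZr k u v : dot v (k *: u) = k * dot v u.
Proof. by rewrite dotC dotZl dotC. Qed.

Lemma dotNr u v : dot v (- u) = - dot v u.
Proof. by rewrite dotC dotNl dotC. Qed.

Lemma dotBr u v w : dot w (u - v) = dot w u - dot w v.
Proof. by rewrite dotDr dotNr. Qed.

Lemma dot0l u : dot 0 u = 0.
Proof. by rewrite -(scale0r 0) dotZl mul0r. Qed.

Lemma dot0r u : dot u 0 = 0.
Proof. by rewrite dotC dot0l. Qed.

Lemma dot_ge0 u : 0 <= dot u u.
Proof. by apply: sumr_ge0 => i _; rewrite -expr2 sqr_ge0. Qed.

Lemma dot_eq0 {u} : dot u u = 0 -> u = 0.
Proof.
move=> /eqP; rewrite psumr_eq0; last by move=> i _; rewrite -expr2 sqr_ge0.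
move=> /allP H; apply/rowP => i; rewrite !mxE.
have := H i (mem_index_enum i); rewrite /= mulf_eq0 orbb => /eqP ->.
by [].
Qed.

Lemma enorm_ge0 u : 0 <= enorm u.
Proof. exact: sqrtr_ge0. Qed.

Lemma enorm_sq u : enorm u ^+ 2 = dot u u.
Proof. by rewrite sqr_sqrtr // dot_ge0. Qed.

Lemma enorm_eq0 {u} : enorm u = 0 -> u = 0.
Proof. by move=> H; apply: dot_eq0; rewrite -enorm_sq H expr0n. Qed.

Lemma enorm0 : enorm (0 : 'rV[R]_n) = 0.
Proof. by rewrite /enorm dot0l sqrtr0. Qed.

Lemma CS u v : dot u v <= enorm u * enorm v.
Proof.
have [u0|] := eqVneq (enorm u) 0.
  by rewrite (enorm_eq0 u0) dot0l enorm0 mul0r.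
have [v0|] := eqVneq (enorm v) 0.
  by rewrite (enorm_eq0 v0) dot0r enorm0 mulr0.
move=> nv nu.
have ha : 0 < enorm u by rewrite lt_neqAle eq_sym nu enorm_ge0.
have hb : 0 < enorm v by rewrite lt_neqAle eq_sym nv enorm_ge0.
set a := enorm u; set b := enorm v.
have H := dot_ge0 (b *: u - a *: v).
rewrite !(dotBl, dotBr, dotZl, dotZr) -!enorm_sq -/a -/b (dotC v u) in H.
have hab : 0 < a * b by rewrite mulr_gt0.
nra.
Qed.

Lemma CSabs u v : `|dot u v| <= enorm u * enorm v.
Proof.
rewrite ler_norml CS andbT.
have := CS (- u) v; rewrite dotNl /enorm dotNl dotNr opprK => H.
by rewrite lerNl.
Qed.

Lemma enormN u : enorm (- u) = enorm u.
Proof. by rewrite /enorm dotNl dotNr opprK. Qed.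

Lemma enormZ k u : enorm (k *: u) = `|k| * enorm u.
Proof.
by rewrite /enorm dotZl dotZr mulrA -expr2 sqrtrM ?sqr_ge0 // sqrtr_sqr.
Qed.

Lemma enormD u v : enorm (u + v) <= enorm u + enorm v.
Proof.
have h1 := enorm_ge0 (u + v); have h2 := enorm_ge0 u; have h3 := enorm_ge0 v.
have H : enorm (u + v) ^+ 2 <= (enorm u + enorm v) ^+ 2.
  rewrite enorm_sq !(dotDl, dotDr) sqrrD -!enorm_sq (dotC v u).
  have := CS u v; lra.
nra.
Qed.

Lemma enormB u v : enorm (u - v) <= enorm u + enorm v.
Proof. by rewrite -(enormN v) enormD. Qed.

Lemma enorm_coord u i : `|u ord0 i| <= enorm u.
Proof.
rewrite -sqrtr_sqr ler_sqrt ?dot_ge0 // /dot (bigD1 i) //= expr2 lerDl.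
by apply: sumr_ge0 => j _; rewrite -expr2 sqr_ge0.
Qed.

Lemma enorm_le_coord u (m : R) : 0 <= m -> (forall i, `|u ord0 i| <= m) -> enorm u <= n%:R * m.
Proof.
move=> m0 H.
have hn : 0 <= n%:R * m by rewrite mulr_ge0.
rewrite -(ger0_norm hn) -sqrtr_sqr ler_sqrt ?sqr_ge0 //.
apply: (@le_trans _ _ (\sum_(i < n) m ^+ 2)).
  apply: ler_sum => i _; rewrite -expr2 -real_normK ?num_real //.
  by rewrite lerXn2r // ?nnegrE ?normr_ge0 //.
rewrite sumr_const card_ord -mulr_natr exprMn.
rewrite mul1r -mulr_natl.
have hn1 : n%:R <= n%:R ^+ 2 :> R.
  by rewrite expr2 -natrM ler_nat; case: (n) => // k; rewrite leq_pmull.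
have := sqr_ge0 m; nra.
Qed.


Definition clus (gs : nat -> 'rV[R]_n) g := forall e : R, 0 < e -> forall N : nat,
  exists2 k, (N <= k)%N & enorm (gs k - g) < e.

Lemma BW (gs : nat -> 'rV[R]_n) (M : R) : (forall k, enorm (gs k) <= M) ->
  exists g, clus gs g.
Proof.
move=> HM.
pose A := [set v : 'rV[R]_n | forall i, `[-M, M]%classic (v ord0 i)].
have cA : compact A.
  by apply: (@rV_compact _ _ (fun=> `[-M, M]%classic)) => _; exact: segment_compact.
have FA : (gs @ \oo) A.
  exists 0%N => // k _ i /=; rewrite in_itv /= -ler_norml.
  exact: le_trans (enorm_coord _ _) (HM k).
have [g [Ag cg]] := cA _ _ FA.
exists g => e e0 N.
pose e' := e / (n%:R + 1).
have hn1 : 0 < n%:R + 1 :> R by rewrite ltr_wpDl.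
have e'0 : 0 < e' by rewrite divr_gt0.
have [v [[k Nk ->] bv]] := cg [set v | exists2 k, (N <= k)%N & v = gs k] (ball g e')
  (ex_intro2 _ _ N I (fun k Nk => ex_intro2 _ _ k Nk erefl)) (nbhsx_ballx g e' e'0).
exists k => //.
move: bv => [_ bv].
have hc : forall i, `|(gs k - g) ord0 i| <= e'.
  by move=> i; rewrite !mxE distrC; apply: ltW; exact: bv ord0 i.
have := enorm_le_coord _ _ (ltW e'0) hc.
move=> h; apply: (le_lt_trans h).
rewrite /e' mulrA ltr_pdivrMr // mulrC ltr_pM2l //.
by rewrite ltrDl.
Qed.

Lemma clus_le0 (gs : nat -> 'rV[R]_n) g u : clus gs g ->
  (forall eta : R, 0 < eta -> exists N, forall k, (N <= k)%N -> dot (gs k) u <= eta) ->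
  dot g u <= 0.
Proof.
move=> cg H.
apply/ler_addgt0Pr => eta eta0; rewrite add0r.
have [N HN] := H (eta / 2) (divr_gt0 eta0 (ltr0Sn _ 1)).
have hu : 0 < enorm u + 1 by rewrite ltr_wpDl ?enorm_ge0.
have [k Nk hk] := cg (eta / 2 / (enorm u + 1)) (divr_gt0 (divr_gt0 eta0 (ltr0Sn _ 1)) hu) N.
have := HN k Nk.
have : dot (g - gs k) u <= enorm (g - gs k) * enorm u by apply: CS.
rewrite dotBl -enormN opprB.
have : enorm (gs k - g) * enorm u <= eta / 2.
  have hk' : enorm (gs k - g) * (enorm u + 1) < eta / 2 by rewrite -ltr_pdivlMr.
  have := enorm_ge0 (gs k - g); nra.
lra.
Qed.


Lemma inv_small (eta : R) : 0 < eta -> exists N : nat, forall k, (N <= k)%N -> (k.+1%:R)^-1 < eta.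
Proof.
move=> e0; have [N HN] := ltr_add_invr e0; rewrite add0r in HN.
exists N => k Nk; apply: le_lt_trans HN.
by rewrite lef_pV2 ?posrE ?ltr0Sn // ler_nat.
Qed.

Lemma inv_le1 k : (k.+1%:R)^-1 <= 1 :> R.
Proof. by rewrite invf_le1 ?ltr0Sn // ler1n. Qed.

Lemma dot_expand (w h : 'rV[R]_n) (t : R) :
  dot (w - t *: h) (w - t *: h) = dot w w - 2 * t * dot w h + t ^+ 2 * dot h h.
Proof. rewrite !(dotBl, dotBr, dotZl, dotZr) (dotC h w); ring. Qed.

Lemma sep (C' : set 'rV[R]_n) p c0 : eclosed C' -> is_convex C' -> C' c0 -> ~ C' p ->
  exists g, enorm g = 1 /\ forall c, C' c -> dot g c <= dot g p.
Proof.
move=> ccl ccv Cc0 nCp.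
pose E := [set enorm (p - c) | c in C'].
have hE : has_inf E.
  split; first by exists (enorm (p - c0)); exists c0.
  by exists 0 => y [c _ <-]; apply: enorm_ge0.
pose d := inf E.
have hc : forall k : nat, exists c, C' c /\ enorm (p - c) < d + (k.+1%:R)^-1.
  move=> k; have k0 : 0 < (k.+1%:R)^-1 :> R by rewrite invr_gt0 ltr0Sn.
  have [e [c Cc <-] he] := inf_adherent k0 hE.
  by exists c.
have [cs hcs] := choice hc.
have hb : forall k, enorm (cs k) <= enorm p + (d + 1).
  move=> k; have [_ h] := hcs k.
  have := enormB p (p - cs k); rewrite opprB addrC subrK.
  have := inv_le1 k; move: (k.+1%:R^-1) h => z h h1 h2; lra.
have [q cq] := BW _ _ hb.
have Cq : C' q.
  apply/not_notP => nCq; have [e e0 He] := ccl q nCq.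
  have [k _ hk] := cq e e0 0%N.
  by apply: (He (cs k) hk); case: (hcs k).
have qmin : forall c, C' c -> enorm (p - q) <= enorm (p - c).
  move=> c Cc; apply/ler_addgt0Pr => eta eta0.
  have dle : d <= enorm (p - c) by apply: (ge_inf hE.2); exists c.
  have [N HN] := inv_small _ (divr_gt0 eta0 (ltr0Sn _ 1)).
  have [k Nk hk] := cq _ (divr_gt0 eta0 (ltr0Sn _ 1)) N.
  have := HN k Nk; have [_ h] := hcs k.
  have := enormD (p - cs k) (cs k - q).
  rewrite addrA subrK; move: (k.+1%:R^-1) h => z h h1 h2; lra.
pose w := p - q.
have w0 : w != 0.
  by apply/eqP => /eqP; rewrite subr_eq0 => /eqP pq; apply: nCp; rewrite pq.
have var : forall c, C' c -> dot w (c - q) <= 0.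
  move=> c Cc; set h := c - q.
  have key : forall t : R, 0 < t -> t <= 1 -> 2 * dot w h <= t * dot h h.
    move=> t t0 t1.
    have Cx := ccv c q t Cc Cq (ltW t0) t1.
    have := qmin _ Cx.
    have -> : p - (t *: c + (1 - t) *: q) = w - t *: h.
      by rewrite /w /h scalerBl scale1r scalerBr; apply/rowP => i; rewrite !mxE; ring.
    move=> hle.
    have hsq : enorm w ^+ 2 <= enorm (w - t *: h) ^+ 2.
      have := enorm_ge0 w; nra.
    rewrite !enorm_sq dot_expand in hsq.
    nra.
  rewrite leNgt; apply/negP => xpos.
  have y0 := dot_ge0 h.
  set x := dot w h in key xpos; set y := dot h h in key y0.
  have xy0 : 0 < x + y by rewrite ltr_wpDr.
  have := key (x / (x + y)) (divr_gt0 xpos xy0).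
  rewrite ler_pdivrMr // mul1r lerDl y0 => /(_ isT).
  have -> : x / (x + y) * y = x * y / (x + y) by rewrite mulrAC.
  rewrite ler_pdivlMr //; nra.
have ww : 0 < dot w w.
  by rewrite lt_neqAle dot_ge0 andbT eq_sym; apply/eqP => /dot_eq0 /eqP; rewrite (negbTE w0).
have nw : 0 < enorm w.
  rewrite lt_neqAle enorm_ge0 andbT eq_sym; apply/eqP => /enorm_eq0 /eqP.
  by rewrite (negbTE w0).
exists ((enorm w)^-1 *: w); split.
  by rewrite enormZ ger0_norm ?invr_ge0 ?enorm_ge0 // mulVf // gt_eqF.
move=> c Cc; rewrite !dotZl ler_wpM2l ?invr_ge0 ?enorm_ge0 //.
have := var c Cc; rewrite dotBr.
have -> : dot w p = dot w q + dot w w by rewrite -dotDr /w addrCA subrr addr0.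
lra.
Qed.


Lemma clus_nz {gs : nat -> 'rV[R]_n} {g} : (forall k, enorm (gs k) = 1) -> clus gs g -> g != 0.
Proof.
move=> h1 cg; apply/eqP => g0.
have [k _] := cg (1/2) (divr_gt0 ltr01 (ltr0Sn _ 1)) 0%N.
by rewrite g0 subr0 h1; lra.
Qed.

Lemma not_ball (C' : set 'rV[R]_n) x :
  ~ (exists2 e : R, 0 < e & forall y, enorm (y - x) < e -> C' y) ->
  forall k : nat, exists p, enorm (p - x) < (k.+1%:R)^-1 /\ ~ C' p.
Proof.
move=> nb k; apply: contrapT => hk; apply: nb.
exists (k.+1%:R^-1); first by rewrite invr_gt0 ltr0Sn.
by move=> y hy; apply: contrapT => nCy; apply: hk; exists y.
Qed.

Lemma sep_seq (C' : set 'rV[R]_n) (ps : nat -> 'rV[R]_n) c0 : eclosed C' -> is_convex C' -> C' c0 ->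
  (forall k, ~ C' (ps k)) ->
  exists gs : nat -> 'rV[R]_n, forall k, enorm (gs k) = 1 /\
     forall c, C' c -> dot (gs k) c <= dot (gs k) (ps k).
Proof.
move=> ccl ccv Cc0 nps.
have h : forall k, exists g, enorm g = 1 /\ forall c, C' c -> dot g c <= dot g (ps k).
  by move=> k; apply: sep ccl ccv Cc0 (nps k).
by have [gs hgs] := choice h; exists gs.
Qed.

Lemma case1 (C C' : set 'rV[R]_n) x z al be :
  C `<=` C' -> eclosed C' -> is_convex C' -> C x -> exposes C x al be ->
  C' z -> be < dot al z ->
  exists2 e : R, 0 < e & forall y, enorm (y - x) < e -> C' y.
Proof.
move=> CC' ccl ccv Cx [_ [_ hex]] C'z hz.
apply: contrapT => nb.
have [ps hps] := choice (not_ball _ _ nb).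
have [gs hgs] := sep_seq _ _ _ ccl ccv (CC' _ Cx) (fun k => (hps k).2).
have hb : forall k, enorm (gs k) <= 1 by move=> k; rewrite (hgs k).1.
have [g cg] := BW _ _ hb.
have gnz := clus_nz (fun k => (hgs k).1) cg.
have key : forall c, C' c -> dot g (c - x) <= 0.
  move=> c Cc; apply: (clus_le0 _ _ _ cg) => eta eta0.
  have [N HN] := inv_small _ eta0.
  exists N => k Nk.
  have h1 := (hgs k).2 c Cc.
  have h2 := CS (gs k) (ps k - x).
  rewrite (hgs k).1 mul1r dotBr in h2.
  have h3 := HN k Nk; have h4 := (hps k).1.
  rewrite dotBr; move: (k.+1%:R^-1) h3 h4 => q h3 h4; lra.
have vg : valid C g (dot g x).
  by move=> c Cc; have := key c (CC' _ Cc); rewrite dotBr subr_le0.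
have [mu mu0 [gE hE]] := hex g (dot g x) gnz vg erefl.
have := key z C'z; rewrite dotBr subr_le0 hE gE dotZl.
rewrite ler_pM2l // leNgt hz //.
Qed.


Lemma ev0 (f : nat -> R) : f @ \oo --> (0 : R) ->
  forall e : R, 0 < e -> exists N, forall k, (N <= k)%N -> `|f k| < e.
Proof.
move/cvgrPdist_lt => h e e0; have [N _ HN] := h e e0.
by exists N => k Nk; have := HN k Nk; rewrite sub0r normrN.
Qed.

Lemma evy (f : nat -> R) : f @ \oo --> +oo ->
  forall M : R, exists N, forall k, (N <= k)%N -> M <= f k.
Proof.
move/cvgryPge => h M; have [N _ HN] := h M.
by exists N.
Qed.

Lemma case2 (C C' : set 'rV[R]_n) xs z al be :
  C `<=` C' -> eclosed C' -> is_convex C' -> C' z -> be < dot al z ->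
  exposes_at_infinity C xs al be ->
  exists k, exists2 e : R, 0 < e & forall y, enorm (y - xs k) < e -> C' y.
Proof.
move=> CC' ccl ccv C'z hz [hinf [d [hd [recd [[vrec [_ hex]] [y [hy hdist]]]]]]].
have [c0 Cc0] : exists c0, C c0.
  apply: contrapT => nC.
  have ral : rec_cone C al by move=> x Cx; exfalso; apply: nC; exists x.
  have h := vrec al ral.
  have al0 : al = 0 by apply: dot_eq0; apply/eqP; rewrite eq_le h dot_ge0.
  by move: hz hy; rewrite al0 !dot0l => hz hy; rewrite hy ltxx in hz.
apply: contrapT => nb.
have nb' : forall k, ~ exists2 e : R, 0 < e & forall y, enorm (y - xs k) < e -> C' y.
  by move=> k hk; apply: nb; exists k.
have [ps hps] := choice (fun k => not_ball _ _ (nb' k) k).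
have [gs hgs] := sep_seq _ _ _ ccl ccv (CC' _ Cc0) (fun k => (hps k).2).
have hb : forall k, enorm (gs k) <= 1 by move=> k; rewrite (hgs k).1.
have [g cg] := BW _ _ hb.
have gnz := clus_nz (fun k => (hgs k).1) cg.
have F1 : forall k v, rec_cone C v -> dot (gs k) v <= 0.
  move=> k v rv; rewrite leNgt; apply/negP => pos.
  set A := dot (gs k) (ps k) - dot (gs k) c0.
  pose s := (`|A| + 1) / dot (gs k) v.
  have s0 : 0 <= s by rewrite divr_ge0 // ?ltW // ltr_wpDl.
  have := (hgs k).2 _ (CC' _ (rv c0 Cc0 s s0)).
  rewrite dotDr dotZr /s divfK ?gt_eqF //.
  have := ler_norm A; rewrite /A; lra.
have hts : forall k : nat, exists t : R,
    enorm (xs k - (y + t *: d)) < Defs.edist (xs k) (aff_line y d) + (k.+1%:R)^-1.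
  move=> k.
  have k0 : 0 < (k.+1%:R)^-1 :> R by rewrite invr_gt0 ltr0Sn.
  have hE : has_inf [set enorm (xs k - z) | z in aff_line y d].
    split; first by exists (enorm (xs k - (y + 0 *: d))); exists (y + 0 *: d) => //; exists 0.
    by exists 0 => r [zz _ <-]; apply: enorm_ge0.
  have [r [zz [t _ <-] <-] hr] := inf_adherent k0 hE.
  by exists t.
have [ts hts'] := choice hts.
pose u := fun k : nat => xs k - (y + ts k *: d).
have Eu : forall e : R, 0 < e -> exists N, forall k, (N <= k)%N -> enorm (u k) < e.
  move=> e e0.
  have [N1 H1] := ev0 _ hdist _ (divr_gt0 e0 (ltr0Sn _ 1)).
  have [N2 H2] := inv_small _ (divr_gt0 e0 (ltr0Sn _ 1)).
  exists (maxn N1 N2) => k Nk.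
  have := H1 k (leq_trans (leq_maxl _ _) Nk); have := H2 k (leq_trans (leq_maxr _ _) Nk).
  have := hts' k; rewrite -/(u k).
  move: (Defs.edist _ _) (k.+1%:R^-1) => ed q h1 h2 h3.
  have := ler_norm ed; lra.
pose X := fun k => enorm (xs k).
pose w := fun k => (X k)^-1 *: xs k - d.
have Ew : forall e : R, 0 < e -> exists N, forall k, (N <= k)%N -> enorm (w k) < e.
  move=> e e0; have [N HN] := ev0 _ hd _ e0.
  by exists N => k Nk; have := HN k Nk; rewrite ger0_norm ?enorm_ge0.
have EX : forall M : R, exists N, forall k, (N <= k)%N -> M <= X k.
  exact: evy _ hinf.
have xsE : forall k, 0 < X k -> xs k = X k *: (d + w k).
  move=> k Xk; rewrite /w addrC subrK scalerA divff ?gt_eqF // scale1r //.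
have G1 : forall v, rec_cone C v -> dot g v <= 0.
  move=> v rv; apply: (clus_le0 _ _ _ cg) => eta eta0.
  by exists 0%N => k _; apply: le_trans (F1 k v rv) (ltW eta0).
have ET : exists N, forall k, (N <= k)%N -> 0 <= ts k.
  have [N1 H1] := Ew (1/4) (divr_gt0 ltr01 (ltr0Sn _ 3)).
  have [N2 H2] := EX (2 * (enorm y + 1) + 1).
  have [N3 H3] := Eu 1 ltr01.
  exists (maxn N1 (maxn N2 N3)) => k Nk.
  have k1 := H1 k (leq_trans (leq_maxl _ _) Nk).
  have k2 := H2 k (leq_trans (leq_maxl _ _) (leq_trans (leq_maxr _ _) Nk)).
  have k3 := H3 k (leq_trans (leq_maxr _ _) (leq_trans (leq_maxr _ _) Nk)).
  have Xk : 0 < X k by apply: lt_le_trans k2; have := enorm_ge0 y; lra.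
  have hD : 1 <= enorm d + enorm (w k).
    have := enormD d (w k); rewrite /w addrC subrK enormZ ger0_norm ?invr_ge0 ?enorm_ge0 //.
    by rewrite mulVf ?gt_eqF.
  set D := enorm d in hD *.
  have D0 : 0 < D by have := enorm_ge0 (w k); lra.
  have tE : ts k * D ^+ 2 = dot d (xs k) - dot d y - dot d (u k).
    rewrite /D enorm_sq -dotZr -!dotBr; congr dot.
    by rewrite /u; apply/rowP => i; rewrite !mxE; ring.
  have h1 : dot d (xs k) >= X k * (D ^+ 2 - D * enorm (w k)).
    rewrite {1}(xsE k Xk) dotZr dotDr -enorm_sq ler_wpM2l ?(ltW Xk) //.
    have := CSabs d (w k); rewrite ler_norml => /andP[h _]; rewrite -/D in h *; lra.
  have h2 : dot d y <= D * enorm y by apply: CS.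
  have h3 : dot d (u k) <= D * enorm (u k) by apply: CS.
  have h4 : D * (X k * (D - enorm (w k)) - enorm y - enorm (u k)) <= ts k * D ^+ 2.
    rewrite tE; move: h1 h2 h3; rewrite expr2; lra.
  rewrite leNgt; apply/negP => tneg.
  have : ts k * D ^+ 2 < 0 by rewrite pmulr_llt0 // exprn_gt0.
  move: h4 k1 k2 k3 Xk D0 hD; move: (X k) (enorm (w k)) (enorm (u k)) (enorm y) (ts k * D ^+ 2) => A B E F G.
  move=> h4 k1 k2 k3 Xk D0 hD hG.
  have s1 : A * (D - B) - F - E < 0.
    by rewrite -(pmulr_rlt0 _ D0); lra.
  have s2 : A / 2 <= A * (D - B) by nra.
  lra.
have hpx : forall k, dot (gs k) (ps k) - dot (gs k) (xs k) < (k.+1%:R)^-1.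
  move=> k; rewrite -dotBr; apply: le_lt_trans (CS _ _) _.
  by rewrite (hgs k).1 mul1r; exact: (hps k).1.
have G2 : dot g (- d) <= 0.
  apply: (clus_le0 _ _ _ cg) => eta eta0.
  pose K := 1 + enorm c0.
  have K0 : 0 <= K by rewrite addr_ge0 ?enorm_ge0.
  have [N1 H1] := Ew (eta / 2) (divr_gt0 eta0 (ltr0Sn _ 1)).
  have [N2 H2] := EX (2 * K / eta + 1).
  exists (maxn N1 N2) => k Nk.
  have k1 := H1 k (leq_trans (leq_maxl _ _) Nk).
  have k2 := H2 k (leq_trans (leq_maxr _ _) Nk).
  have p0 : 0 < 2 * K / eta + 1.
    by rewrite ltr_wpDl //; apply: divr_ge0; [rewrite mulr_ge0 | exact: ltW].
  have Xk := lt_le_trans p0 k2.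
  have hXe : 2 * K + eta <= X k * eta.
    have : (2 * K / eta + 1) * eta <= X k * eta by rewrite (ler_pM2r eta0).
    by rewrite mulrDl mul1r divfK ?gt_eqF.
  have hc0 := (hgs k).2 c0 (CC' _ Cc0).
  have hp := hpx k.
  have hq := inv_le1 k.
  have hc0' : - enorm c0 <= dot (gs k) c0.
    by have := CSabs (gs k) c0; rewrite (hgs k).1 mul1r ler_norml => /andP[].
  have hx : dot (gs k) (xs k) = X k * (dot (gs k) d + dot (gs k) (w k)).
    by rewrite {1}(xsE k Xk) dotZr dotDr.
  have hw : dot (gs k) (w k) <= enorm (w k).
    by have := CS (gs k) (w k); rewrite (hgs k).1 mul1r.
  rewrite dotNr.
  move: hx hw hc0 hc0' hp hq k1 hXe Xk.
  move: (dot (gs k) (xs k)) (dot (gs k) (w k)) (dot (gs k) d) (dot (gs k) c0)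
    (dot (gs k) (ps k)) (k.+1%:R^-1) (enorm (w k)) (X k) => a1 a2 a3 a4 a5 a6 a7 a8.
  rewrite /K; move: (enorm c0) => a9.
  move=> hx hw hc0 hc0' hp hq k1 hXe Xk.
  nra.
have G3 : dot g (z - y) <= 0.
  apply: (clus_le0 _ _ _ cg) => eta eta0.
  have [N1 H1] := inv_small _ (divr_gt0 eta0 (ltr0Sn _ 1)).
  have [N2 H2] := Eu (eta / 2) (divr_gt0 eta0 (ltr0Sn _ 1)).
  have [N3 H3] := ET.
  exists (maxn N1 (maxn N2 N3)) => k Nk.
  have k1 := H1 k (leq_trans (leq_maxl _ _) Nk).
  have k2 := H2 k (leq_trans (leq_maxl _ _) (leq_trans (leq_maxr _ _) Nk)).
  have k3 := H3 k (leq_trans (leq_maxr _ _) (leq_trans (leq_maxr _ _) Nk)).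
  have hz' := (hgs k).2 z C'z.
  have hp := hpx k.
  have xE : xs k = y + ts k *: d + u k.
    by rewrite /u; apply/rowP => i; rewrite !mxE; ring.
  have hx : dot (gs k) (xs k) = dot (gs k) y + ts k * dot (gs k) d + dot (gs k) (u k).
    by rewrite {1}xE !dotDr dotZr.
  have gd := F1 k d recd.
  have tg : ts k * dot (gs k) d <= 0 by rewrite mulr_ge0_le0.
  have hu : dot (gs k) (u k) <= enorm (u k).
    by have := CS (gs k) (u k); rewrite (hgs k).1 mul1r.
  rewrite dotBr.
  move: (k.+1%:R^-1) hp k1 => q hp k1.
  lra.
have vg : valid (rec_cone C) g 0 by move=> v rv; apply: G1.
have gd : dot g d = 0.
  by apply/eqP; rewrite eq_le G1 //= -oppr_le0 -dotNr G2.
have [mu mu0 [gE _]] := hex g 0 gnz vg gd.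
move: G3; rewrite gE dotZl dotBr hy pmulr_rle0 // subr_le0 leNgt hz.
by [].
Qed.

End Aux.

Theorem theorem5 (R : realType) (n : nat) (S : set 'rV[R]_n)
    (a : 'rV[R]_n) (b : R) (C : set 'rV[R]_n) (Gamma : set ('rV[R]_n * R)) :
  eclosed S ->
  a != 0 ->
  is_convex C ->
  S_free S C ->
  C = [set x | forall p, Gamma p -> dot p.1 x <= p.2] ->
  (forall p, Gamma p ->
     (exists2 x, (S `&` C `&` hyperplane a b) x & exposes C x p.1 p.2) \/
     (exists2 xs : nat -> 'rV[R]_n, (forall k, (S `&` hyperplane a b) (xs k)) &
        exposes_at_infinity C xs p.1 p.2)) ->
  maximal_S_free_wrt S (hyperplane a b) C.
Proof.
move=> hS ha hC hfree hCdef hG C' ccl ccv CC' hfree' z [C'z Hz].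
split => //.
apply: contrapT => nCz.
have [p [Gp hp]] : exists p, Gamma p /\ p.2 < dot p.1 z.
  apply: contrapT => hn; apply: nCz; rewrite hCdef => q Gq.
  by rewrite leNgt; apply/negP => hq; apply: hn; exists q.
have ball_contra : forall w, S w -> hyperplane a b w ->
    (exists2 e : R, 0 < e & forall y, enorm (y - w) < e -> C' y) -> False.
  move=> w Sw Hw [e e0 he].
  have : (relinterior (hyperplane a b) (C' `&` hyperplane a b) `&`
          (S `&` hyperplane a b)) w.
    split; last by split.
    split; first exact: Hw.
    split; first by split => //; apply: he; rewrite subrr enorm0.
    by exists e => // y0 Hy0 hy0; split => //; apply: he.
  by rewrite hfree'.
case: (hG p Gp) => [[x [[Sx Cx] Hx] hexp] | [xs hxs hexp]].
  apply: (ball_contra x Sx Hx).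
  exact: (@case1 _ _ _ _ _ _ _ _ CC' ccl ccv Cx hexp C'z hp).
have [k hk] := @case2 _ _ _ _ _ _ _ _ CC' ccl ccv C'z hp hexp.
have [Sk Hk] := hxs k.
exact: ball_contra _ Sk Hk hk.
Qed.
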